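(* Let $B$ be an $n\times n$ matrix all of whose entries are $-1$ or $+1$, and suppose all eigenvalues of $B$ are real and positive. Then $n=1$ and $B=[1]$.
   Context: Eigenvalues are taken over $\mathbb{C}$. *)

(* Defs.v *)
From HB Require Import structures.
From mathcomp Require Import all_boot all_order all_algebra all_field.
Set Implicit Arguments. Unset Strict Implicit. Unset Printing Implicit Defensive.

(* Main.v *)
Require Import Defs.
From HB Require Import structures.
From mathcomp Require Import all_boot all_order all_algebra all_field.
Import Order.TTheory GRing.Theory Num.Theory.
Local Open Scope ring_scope.

Lemma det_even n (B : 'M[algC]_n.+2) :
  (forall i j, B i j = 1 \/ B i j = -1) ->
  exists d : int, \det B = d%:~R /\ (2 %| d)%Z.
Proof.
move=> HB.
pose B' : 'M[int]_n.+2 := \matrix_(i, j) (if B i j == 1 then 1 else -1).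
have -> : B = map_mx (intr : int -> algC) B'.
  apply/matrixP => i j; rewrite !mxE; case: (HB i j) => ->; rewrite ?eqxx //.
  have -> : (-1 == 1 :> algC) = false by rewrite -subr_eq0 -opprD oppr_eq0 (pnatr_eq0 _ 2).
  by [].
exists (\det B'); split; first by rewrite det_map_mx.
have pc : (2%N \in [pchar 'F_2]) by exact: pchar_Fp.
rewrite (dvdz_pcharf pc) -det_map_mx.
apply/eqP; apply: (determinant_alternate (i1 := 0) (i2 := 1)) => // j.
by rewrite !mxE; case: ifP; case: ifP => _ _ //=; rewrite ?rmorphN rmorph1; apply/eqP.
Qed.

Lemma det_bounds n (B : 'M[algC]_n) :
  (0 < n)%N ->
  (forall i j, B i j = 1 \/ B i j = -1) ->
  (forall a : algC, eigenvalue B a -> a \is Num.real /\ 0 < a) ->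
  0 < \det B /\ \det B <= 1.
Proof.
move=> n0 HB Hev.
have [r Hr] := closed_field_poly_normal (char_poly B).
rewrite (monicP (char_poly_monic B)) scale1r in Hr.
have sr : size r = n.
  by apply/eq_add_S; rewrite -(size_prod_XsubC r id) -Hr size_char_poly.
have rpos : forall z, z \in r -> 0 < z.
  move=> z zr; apply: (proj2 (Hev z _)); rewrite eigenvalue_root_char Hr.
  by rewrite root_prod_XsubC.
have Hdet : \det B = \prod_(z <- r) z.
  have := char_poly_det B; rewrite Hr coef0_prod_XsubC sr => /(congr1 (fun x => (-1) ^+ n * x)).
  by rewrite !signrMK.
have Htr : \tr B = \sum_(z <- r) z.
  have := char_poly_trace B n0; rewrite Hr -{1}sr coefPn_prod_XsubC ?sr -?lt0n //.
  by move/oppr_inj.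
have trn : \tr B <= n%:R.
  rewrite /mxtrace -[n in n%:R]card_ord -sumr_const; apply: ler_sum => i _.
  by case: (HB i i) => ->; rewrite // (le_trans (lerN10 _)).
have tr0 : 0 <= \tr B.
  by rewrite Htr big_seq; apply: sumr_ge0 => z /rpos /ltW.
split.
  by rewrite Hdet big_seq; apply: prodr_gt0.
have nR : 0 < n%:R :> algC by rewrite ltr0n.
apply: (le_trans (y := (\tr B / n%:R) ^+ n)); last first.
  apply: exprn_ile1; first by rewrite divr_ge0 // ltW.
  by rewrite ler_pdivrMr // mul1r.
rewrite Hdet Htr -sr [\prod_(z <- r) z](big_nth 0) [\sum_(z <- r) z](big_nth 0) !big_mkord.
have := leif_AGM (A := predT) (E := fun i : 'I_(size r) => r`_i).
rewrite /= card_ord => H; apply: (leif_le (H _)) => i _.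
by apply/ltW/rpos/mem_nth.
Qed.

Theorem mainTheorem6 (n : nat) (B : 'M[algC]_n) :
  (0 < n)%N ->
  (forall i j, B i j = 1 \/ B i j = -1) ->
  (forall a : algC, eigenvalue B a -> a \is Num.real /\ 0 < a) ->
  n = 1%N /\ (forall i j, B i j = 1).
Proof.
move=> n0 HB Hev.
have [d0 d1] := @det_bounds n B n0 HB Hev.
case: n n0 B HB Hev d0 d1 => [//|[|n]] _ B HB Hev d0 d1.
  split => // i j; rewrite !ord1; move: d0; rewrite det_mx11.
  case: (HB 0 0) => // ->; rewrite oppr_gt0 ltr10 //.
have [d [Hd H2]] := @det_even _ B HB.
move: d0 d1; rewrite Hd ltr0z => dp d1.
have d1' : d <= 1 by rewrite -(ler_int algC) rmorph1.
have e : d = 1 by apply/le_anti; rewrite d1' -gtz0_ge1.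
by rewrite e in H2.
Qed.
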